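(* Let $0\le t\le 1$ and $u>0$, and let $D=\mathrm{DASEP}(3,2,2)$ with stationary distribution $\mathrm{Pd}$. Then the following are equivalent: (i) $t=1$; (ii) for every partition $\lambda$ with $\lambda_1\le 2$ and exactly $2$ nonzero parts (i.e. $\lambda\in\{(1,1,0),(2,1,0),(2,2,0)\}$) and all $\mu,\nu\in S_3(\lambda)$, $$\frac{\Pr_\lambda(\mu)}{\Pr_\lambda(\nu)}=\frac{\mathrm{Pd}(\mu)}{\mathrm{Pd}(\nu)}.$$
   Context: For a partition $\lambda=(\lambda_1\ge\dots\ge\lambda_n\ge 0)$ of nonnegative integers, $S_n(\lambda)$ denotes the set of all distinct rearrangements of $\lambda$, viewed as words $(\mu_1,\dots,\mu_n)$ whose positions $1,\dots,n$ lie on a circle. Fix $0\le t\le 1$. ASEP($\lambda$) is the Markov chain on $S_n(\lambda)$ with transition probabilities $P_{\mu,\nu}$ defined as follows. If $\mu$ has entries $i\ne j$ in adjacent positions $k,k+1$ ($1\le k\le n-1$) and $\nu$ is obtained from $\mu$ by swapping them, then $P_{\mu,\nu}=t/n$ if $i>j$ and $P_{\mu,\nu}=1/n$ if $i<j$. If $\mu=(i,\mu_2,\dots,\mu_{n-1},j)$ with $i\ne j$ and $\nu=(j,\mu_2,\dots,\mu_{n-1},i)$, then $P_{\mu,\nu}=t/n$ if $j>i$ and $P_{\mu,\nu}=1/n$ if $i>j$. All other off-diagonal transition probabilities are $0$, and the diagonal entries are chosen so that each row sums to $1$. $\Pr_\lambda$ denotes the stationary distribution of ASEP($\lambda$). Fix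 also $u>0$. For positive integers $n,p,q$ with $n>q$, DASEP$(n,p,q)$ is the Markov chain on the set of words in $\{0,1,\dots,p\}^n$ with exactly $q$ nonzero entries (equivalently, the union of $S_n(\lambda)$ over partitions $\lambda$ with $\lambda_1\le p$ and exactly $q$ nonzero parts). Its transition probabilities are as follows. The two swap rules of ASEP apply, with probabilities $t/(3n)$ and $1/(3n)$ in place of $t/n$ and $1/n$. Replacing a single entry $i$ with $1\le i\le p-1$ by $i+1$ has probability $u/(3n)$. Replacing a single entry $i+1$ with $i\ge 1$ by $i$ has probability $1/(3n)$. All other off-diagonal transition probabilities are $0$, and the diagonal entries make each row sum to $1$. $\mathrm{Pd}$ denotes the stationary distribution of the DASEP. *)

(* Defs.v *)
From mathcomp Require Import all_boot all_order all_algebra perm.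
Set Implicit Arguments. Unset Strict Implicit. Unset Printing Implicit Defensive.
Import Order.TTheory GRing.Theory Num.Theory.
Local Open Scope ring_scope.

(* Words of length n over the alphabet {0,...,p}; positions 0..n-1
   (= positions 1..n of the paper) lie on a circle. *)
Definition word (n p : nat) := {ffun 'I_n -> 'I_p.+1}.

Definition swapw n p (w : word n p) (a b : 'I_n) : word n p :=
  [ffun k => w (tperm a b k)].

Definition posFirst n : 'I_n.+1 := ord0.
Definition posLast n : 'I_n.+1 := ord_max.
Definition posNext n (k : 'I_n.+1) : 'I_n.+1 := inord k.+1.

Section Chains.
Variable R : realFieldType.
Variables (n p : nat).
Notation W := (word n.+1 p).

(* Swap contribution (ASEP rules), with rate parameter c in place of 1/n:
   adjacent positions k,k+1 with entries i > j : rate t*c, i < j : rate c;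
   boundary swap (i,...,j) -> (j,...,i): rate t*c if j > i, rate c if i > j. *)
Definition swap_rate (t c : R) (mu nu : W) : R :=
  \sum_(k : 'I_n.+1 | (k.+1 < n.+1)%N)
     (if (nu == swapw mu k (posNext k)) && (mu k != mu (posNext k)) then
        (if (nat_of_ord (mu (posNext k)) < mu k)%N then t * c else c)
      else 0)
  + (if (nu == swapw mu (posFirst n) (posLast n))
        && (mu (posFirst n) != mu (posLast n)) then
       (if (nat_of_ord (mu (posFirst n)) < mu (posLast n))%N then t * c else c)
     else 0).

Definition asep_off (t : R) (mu nu : W) : R :=
  swap_rate t (n.+1%:R)^-1 mu nu.

Definition differs_only_at (mu nu : W) (k : 'I_n.+1) : bool :=
  (mu k != nu k) && [forall j, (j != k) ==> (mu j == nu j)].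

Definition dasep_off (t u : R) (mu nu : W) : R :=
  let c := (3 * n.+1)%:R^-1 in
  swap_rate t c mu nu
  + \sum_(k : 'I_n.+1 | differs_only_at mu nu k)
      ((if [&& (1 <= mu k)%N, (mu k <= p.-1)%N & (nat_of_ord (nu k) == (mu k).+1)]
        then u * c else 0)
       + (if (2 <= mu k)%N && ((nu k : nat).+1 == mu k) then c else 0)).

Definition markov (S : pred W) (off : W -> W -> R) (mu nu : W) : R :=
  if mu == nu then 1 - \sum_(nu' | (nu' \in S) && (nu' != mu)) off mu nu'
  else off mu nu.

Definition stationary (S : pred W) (off : W -> W -> R) (pi : W -> R) : Prop :=
  [/\ forall w, w \in S -> 0 <= pi w,
      \sum_(w | w \in S) pi w = 1 &
      forall nu, nu \in S -> pi nu = \sum_(mu | mu \in S) pi mu * markov S off mu nu].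

Definition rearr (lam : W) : pred W := fun w => perm_eq (fgraph w) (fgraph lam).

Definition nnz (w : W) : nat := #|[set k | nat_of_ord (w k) != 0%N]|.

Definition dasep_space (q : nat) : pred W := fun w => nnz w == q.

Definition is_partition (lam : W) : bool :=
  [forall i : 'I_n.+1, forall j : 'I_n.+1, (i <= j)%N ==> (lam j <= lam i)%N].

Definition Pr_stationary (t : R) (lam : W) (pi : W -> R) : Prop :=
  stationary (rearr lam) (asep_off t) pi.

Definition Pd_stationary (t u : R) (q : nat) (pi : W -> R) : Prop :=
  stationary (dasep_space q) (dasep_off t u) pi.

End Chains.

(* Main.v *)
Require Import Defs.
From mathcomp Require Import all_boot all_order all_algebra perm.
From mathcomp Require Import ring lra.
Import Order.TTheory GRing.Theory Num.Theory.
Local Open Scope ring_scope.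
Set Implicit Arguments. Unset Strict Implicit. Unset Printing Implicit Defensive.

Section Markov.
Variables (R : realFieldType) (n p : nat).
Local Notation T := (word n.+1 p).
Variables (S : pred T) (off : T -> T -> R).
Hypothesis off_diag : forall w, off w w = 0.

Definition In (pi : T -> R) nu := \sum_(mu | mu \in S) pi mu * off mu nu.
Definition Out nu := \sum_(nu' | nu' \in S) off nu nu'.

Lemma markov_sum pi nu : nu \in S ->
  \sum_(mu | mu \in S) pi mu * markov S off mu nu = pi nu - pi nu * Out nu + In pi nu.
Proof.
move=> nuS; rewrite (bigD1 nu) //= /markov eqxx.
have -> : \sum_(nu' | (nu' \in S) && (nu' != nu)) off nu nu' = Out nu.
  by rewrite /Out [in RHS](bigD1 nu) //= off_diag add0r.
have -> : In pi nu = \sum_(mu | (mu \in S) && (mu != nu)) pi mu * off mu nu.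
  by rewrite /In (bigD1 nu) //= off_diag mulr0 add0r.
rewrite mulrBr mulr1; congr (_ + _).
by apply: eq_bigr => mu /andP[_ /negbTE]; rewrite eq_sym => ->.
Qed.

Lemma st_bal pi : stationary S off pi -> forall nu, nu \in S -> In pi nu = pi nu * Out nu.
Proof.
case=> _ _ H nu nuS; move: (H nu nuS); rewrite markov_sum // => E.
have : pi nu * Out nu - In pi nu = 0.
  have -> : pi nu * Out nu - In pi nu = pi nu - (pi nu - pi nu * Out nu + In pi nu) by ring.
  by rewrite -E subrr.
by move/eqP; rewrite subr_eq0 => /eqP.
Qed.

Lemma bal_st pi : (forall w, w \in S -> 0 <= pi w) -> \sum_(w | w \in S) pi w = 1 ->
  (forall nu, nu \in S -> In pi nu = pi nu * Out nu) -> stationary S off pi.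
Proof.
move=> h1 h2 h3; split => // nu nuS; rewrite markov_sum // h3 //; ring.
Qed.

Hypothesis off_ge0 : forall a b, 0 <= off a b.
Definition connS := forall Z : T -> Prop,
  (forall a b, a \in S -> b \in S -> Z a -> 0 < off b a -> Z b) ->
  forall a b, a \in S -> b \in S -> Z a -> Z b.
Hypothesis hconn : connS.

Lemma In_lin pi pi' (l : R) nu : In (fun w => pi w - l * pi' w) nu = In pi nu - l * In pi' nu.
Proof.
rewrite /In mulr_sumr -sumrB; apply: eq_bigr => mu _; ring.
Qed.

Lemma closure (d : T -> R) : (forall w, w \in S -> 0 <= d w) ->
  (forall nu, nu \in S -> In d nu = d nu * Out nu) ->
  forall a b, a \in S -> b \in S -> d a = 0 -> 0 < off b a -> d b = 0.
Proof.
move=> dge bal a b aS bS da0 hoff.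
have : In d a = 0 by rewrite bal // da0 mul0r.
have hn : forall mu, mu \in S -> 0 <= d mu * off mu a.
  by move=> mu muS; exact: mulr_ge0 (dge _ muS) (off_ge0 _ _).
move/(psumr_eq0P hn) => H.
have /eqP := H b bS; rewrite mulf_eq0 => /orP[/eqP //|].
by rewrite (gt_eqF hoff).
Qed.

Lemma st_pos pi : stationary S off pi -> forall w, w \in S -> 0 < pi w.
Proof.
move=> st w wS; have bal := st_bal st; case: st => ge sum1 _.
rewrite lt_def ge // andbT; apply/eqP => pw0.
have all0 : forall b, b \in S -> pi b = 0.
  move=> b bS; apply: (hconn (Z := fun a => pi a = 0) _ wS bS pw0).
  exact: (closure ge bal).
have s0 : \sum_(w | w \in S) pi w = 0 by apply: big1 => b; exact: all0.
by move: sum1; rewrite s0 => /esym/eqP; rewrite oner_eq0.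
Qed.

Lemma st_uniq pi pi' : stationary S off pi -> stationary S off pi' ->
  forall w, w \in S -> pi w = pi' w.
Proof.
move=> st st' w0 w0S.
have p0 := st_pos st; have p0' := st_pos st'.
have bal := st_bal st; have bal' := st_bal st'.
case: (arg_minP (fun w => pi w / pi' w) w0S) => ws wsS wsmin.
set l := pi ws / pi' ws.
pose d w := pi w - l * pi' w.
have dge : forall w, w \in S -> 0 <= d w.
  move=> w wS; rewrite /d subr_ge0 -ler_pdivlMr ?p0' //; exact: wsmin.
have dbal : forall nu, nu \in S -> In d nu = d nu * Out nu.
  by move=> nu nuS; rewrite /d In_lin bal // bal' //; ring.
have dws : d ws = 0 by rewrite /d /l divfK ?subrr // gt_eqF ?p0'.
have all0 : forall b, b \in S -> d b = 0.
  move=> b bS; apply: (hconn (Z := fun a => d a = 0) _ wsS bS dws).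
  exact: (closure dge dbal).
have eq1 : forall b, b \in S -> pi b = l * pi' b.
  by move=> b bS; apply/eqP; rewrite -subr_eq0; apply/eqP; exact: all0.
have l1 : l = 1.
  case: st => _ s1 _; case: st' => _ s1' _.
  move: s1; rewrite (eq_bigr (fun b => l * pi' b)); last exact: eq1.
  by rewrite -mulr_sumr s1' mulr1.
by rewrite eq1 // l1 mul1r.
Qed.

End Markov.

Section Sym.
Variables (R : realFieldType) (n p : nat).
Local Notation T := (word n.+1 p).
Variables (S : pred T) (off : T -> T -> R).
Variables (f g : T -> T).
Hypotheses (fK : cancel f g) (gK : cancel g f).
Hypothesis fS : forall w, (f w \in S) = (w \in S).
Hypothesis foff : forall a b, off (f a) (f b) = off a b.

Lemma st_sym pi : stationary S off pi -> stationary S off (fun w => pi (f w)).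
Proof.
have finj : injective f := can_inj fK.
case=> ge s1 H; split.
- by move=> w wS; apply: ge; rewrite fS.
- by rewrite -s1 [RHS](reindex_inj finj) /=; apply: eq_bigl => w; rewrite fS.
- move=> nu nuS; rewrite H ?fS // [LHS](reindex_inj finj) /=.
  apply: eq_big => [w|mu _]; first by rewrite fS.
  congr (_ * _).
  rewrite /markov (inj_eq finj) foff; case: (mu == nu) => //; congr (_ - _).
  rewrite (reindex_inj finj) /=; apply: eq_big => [w|w _]; first by rewrite fS (inj_eq finj).
  by rewrite foff.
Qed.
End Sym.

Notation W := (word 3 2).
Definition N3 := (nat * nat * nat)%type.
Definition o0 : 'I_3 := @Ordinal 3 0 isT.
Definition o1 : 'I_3 := @Ordinal 3 1 isT.
Definition o2 : 'I_3 := @Ordinal 3 2 isT.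
Definition getT (x : N3) (i : nat) : nat :=
  match i with 0 => x.1.1 | 1 => x.1.2 | _ => x.2 end.
Definition tr (w : W) : N3 := (nat_of_ord (w o0), nat_of_ord (w o1), nat_of_ord (w o2)).
Definition validT (x : N3) := [&& (x.1.1 < 3)%N, (x.1.2 < 3)%N & (x.2 < 3)%N].
Definition mkw (x : N3) : W := [ffun i : 'I_3 => inord (getT x i)].

Lemma ord3 (i : 'I_3) : i = o0 \/ i = o1 \/ i = o2.
Proof.
case: i => [[|[|[|m]]] H]; [left|right;left|right;right|by []]; exact: val_inj.
Qed.

Lemma trE (w : W) (i : 'I_3) : nat_of_ord (w i) = getT (tr w) i.
Proof. by case: (ord3 i) => [->|[->|->]]. Qed.

Lemma tr_inj : injective tr.
Proof.
move=> w w' /= E; apply/ffunP => i; apply: val_inj; rewrite /= !trE; by rewrite E.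
Qed.

Lemma tr_valid w : validT (tr w).
Proof. by rewrite /validT /= !ltn_ord. Qed.

Lemma tr_mkw x : validT x -> tr (mkw x) = x.
Proof.
case: x => [[a b] c] /and3P[/= ha hb hc].
by rewrite /tr /mkw !ffunE /= !inordK.
Qed.

Lemma mkw_tr w : mkw (tr w) = w.
Proof.
apply/ffunP => i; rewrite ffunE; apply: val_inj; rewrite /= inordK -trE //.
Qed.

Lemma weqE (a b : W) : (a == b) = (tr a == tr b).
Proof. by rewrite (inj_eq tr_inj). Qed.

Lemma wneqE (mu nu : W) (a b : 'I_3) : (mu a == nu b) = (getT (tr mu) a == getT (tr nu) b).
Proof. by rewrite -!trE. Qed.

Definition tp (i j k : nat) : nat := if k == i then j else if k == j then i else k.
Definition swT (x : N3) (i j : nat) : N3 :=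
  (getT x (tp i j 0), getT x (tp i j 1), getT x (tp i j 2)).

Lemma tpermE (i j k : 'I_3) : nat_of_ord (tperm i j k) = tp i j k.
Proof.
rewrite /tp; case: tpermP => [->|->|hi hj]; rewrite ?eqxx //.
  by case: eqP => // /val_inj ->.
by case: eqP => [/val_inj //|_]; case: eqP => [/val_inj //|_].
Qed.

Lemma tr_swapw (mu : W) (i j : 'I_3) : tr (swapw mu i j) = swT (tr mu) i j.
Proof.
by rewrite /swapw {1}/tr !ffunE !trE !tpermE.
Qed.

Definition sA (x y : N3) (i j : nat) : bool :=
  (y == swT x i j) && (getT x i != getT x j).
Definition swc (x y : N3) : nat * nat :=
  ((sA x y 0 1 && (getT x 1 < getT x 0)%N : nat) + (sA x y 1 2 && (getT x 2 < getT x 1)%N : nat)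
    + (sA x y 0 2 && (getT x 0 < getT x 2)%N : nat),
   (sA x y 0 1 && ~~ (getT x 1 < getT x 0)%N : nat) + (sA x y 1 2 && ~~ (getT x 2 < getT x 1)%N : nat)
    + (sA x y 0 2 && ~~ (getT x 0 < getT x 2)%N : nat))%N.

Lemma termE (R : realFieldType) (A B : bool) (t c : R) :
  (if A then (if B then t * c else c) else 0) = (((A && B) : nat)%:R * t + ((A && ~~B) : nat)%:R) * c.
Proof. by case: A; case: B => /=; rewrite ?mulr1n ?mulr0n; ring. Qed.

Lemma posNext0 : nat_of_ord (posNext (ord0 : 'I_3)) = 1%N.
Proof. by rewrite /posNext inordK. Qed.
Lemma posNext1 : nat_of_ord (posNext (lift ord0 (ord0 : 'I_2))) = 2%N.
Proof. by rewrite /posNext inordK. Qed.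

Lemma swap_rateE (R : realFieldType) (t c : R) (mu nu : W) :
  swap_rate t c mu nu = ((swc (tr mu) (tr nu)).1%:R * t + (swc (tr mu) (tr nu)).2%:R) * c.
Proof.
rewrite /swap_rate big_mkcond !big_ord_recl big_ord0 /=.
rewrite !termE !weqE !tr_swapw !wneqE !trE !posNext0 !posNext1 /=.
rewrite /swc /sA /= !natrD; ring.
Qed.

Definition difT (x y : N3) (k : nat) : bool :=
  (getT x k != getT y k) && all (fun j => (j != k) ==> (getT x j == getT y j)) [:: 0; 1; 2]%N.
Definition upT (x y : N3) (k : nat) : bool :=
  [&& (1 <= getT x k)%N, (getT x k <= 1)%N & (getT y k == (getT x k).+1)].
Definition dnT (x y : N3) (k : nat) : bool :=
  (2 <= getT x k)%N && ((getT y k).+1 == getT x k).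
Definition grc (x y : N3) : nat * nat :=
  ((difT x y 0 && upT x y 0 : nat) + (difT x y 1 && upT x y 1 : nat) + (difT x y 2 && upT x y 2 : nat),
   (difT x y 0 && dnT x y 0 : nat) + (difT x y 1 && dnT x y 1 : nat) + (difT x y 2 && dnT x y 2 : nat))%N.

Lemma termD (R : realFieldType) (D A B : bool) (u c : R) :
  (if D then ((if A then u * c else 0) + (if B then c else 0)) else 0) =
  (((D && A) : nat)%:R * u + ((D && B) : nat)%:R) * c.
Proof. by case: D; case: A; case: B => /=; rewrite ?mulr1n ?mulr0n; ring. Qed.

Lemma forall3 (P : pred 'I_3) : [forall j, P j] = [&& P o0, P o1 & P o2].
Proof.
apply/forallP/and3P => [H|[h0 h1 h2] j]; first by split; apply: H.
by case: (ord3 j) => [->|[->|->]].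
Qed.

Lemma ordeqE (a b : 'I_3) : (a == b) = (nat_of_ord a == nat_of_ord b).
Proof. by []. Qed.

Definition cD (R : realFieldType) : R := (3 * 3)%:R^-1.

Lemma dasep_offE (R : realFieldType) (t u : R) (mu nu : W) :
  dasep_off t u mu nu =
  ((swc (tr mu) (tr nu)).1%:R * t + (swc (tr mu) (tr nu)).2%:R) * cD R +
  ((grc (tr mu) (tr nu)).1%:R * u + (grc (tr mu) (tr nu)).2%:R) * cD R.
Proof.
rewrite /dasep_off swap_rateE; congr (_ + _).
rewrite big_mkcond !big_ord_recl big_ord0 /differs_only_at /=.
rewrite !forall3 !termD !wneqE !trE /=.
rewrite /grc /difT /upT /dnT /= !andbT !natrD /cD; ring.
Qed.

Definition seqT (x : N3) : seq nat := [:: x.1.1; x.1.2; x.2].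
Definition nnzT (x : N3) : nat := ((x.1.1 != 0%N) + (x.1.2 != 0%N) + (x.2 != 0%N))%N.
Definition partT (x : N3) : bool := (x.1.2 <= x.1.1)%N && (x.2 <= x.1.2)%N.

Lemma nnzE (w : W) : nnz w = nnzT (tr w).
Proof.
rewrite /nnz cardsE -sum1_card big_mkcond !big_ord_recl big_ord0 /= /nnzT.
rewrite !unfold_in /= !trE /=.
by case: (_ != _); case: (_ != _); case: (_ != _).
Qed.

Lemma in_ds (w : W) : (w \in dasep_space 2) = (nnzT (tr w) == 2%N).
Proof. by rewrite unfold_in /dasep_space /= nnzE. Qed.

Lemma enum3 : enum 'I_3 = [:: o0; o1; o2].
Proof. by apply: (inj_map val_inj); rewrite val_enum_ord. Qed.

Lemma fgraphE (w : W) : map val (fgraph w) = seqT (tr w).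
Proof. by rewrite fgraph_codom /= codomE enum3. Qed.

Lemma in_rearr (w lam : W) : (w \in rearr lam) = perm_eq (seqT (tr w)) (seqT (tr lam)).
Proof.
rewrite unfold_in /rearr /= -!fgraphE; apply/idP/idP; first exact: perm_map.
by move=> H; apply: (@perm_map_inj _ _ (@nat_of_ord 3)) H; apply: val_inj.
Qed.

Lemma partE (lam : W) : is_partition lam = partT (tr lam).
Proof.
rewrite /is_partition forall3 !forall3 /= !trE /= /partT.
rewrite !leqnn /= andbT.
case: (leqP (lam o1) (lam o0)) => h1; case: (leqP (lam o2) (lam o1)) => h2 //=.
  by rewrite (leq_trans h2 h1).
by rewrite andbF.
Qed.

Lemma mkw_inj_in (L : seq N3) : all validT L -> {in L &, injective mkw}.
Proof.
move=> /allP hv x y xL yL E.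
by rewrite -(tr_mkw (hv x xL)) E tr_mkw // hv.
Qed.

Lemma mem_mkw (L : seq N3) (w : W) : all validT L -> (w \in map mkw L) = (tr w \in L).
Proof.
move=> /allP hv; apply/mapP/idP => [[x xL ->]|H]; first by rewrite tr_mkw // hv.
by exists (tr w); rewrite ?mkw_tr.
Qed.

Lemma sum_list (R : realFieldType) (F : W -> R) (P : pred W) (L : seq N3) :
  all validT L -> uniq L -> (forall w, P w = (tr w \in L)) ->
  \sum_(w | P w) F w = \sum_(x <- L) F (mkw x).
Proof.
move=> hv hu hP; rewrite -(big_map mkw xpredT F) big_uniq.
  by apply: eq_bigl => w; rewrite hP mem_mkw.
by rewrite (map_inj_in_uniq (mkw_inj_in hv)).
Qed.

Definition allN (P : N3 -> bool) :=
  all (fun a => all (fun b => all (fun c => P (a, b, c)) (iota 0 3)) (iota 0 3)) (iota 0 3).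

Lemma allN_valid (P : N3 -> bool) : allN P -> forall x, validT x -> P x.
Proof.
move=> H [[a b] c] /and3P[/= ha hb hc].
move/allP: H => /(_ a); rewrite mem_iota ha => /(_ isT) /allP /(_ b).
rewrite mem_iota hb => /(_ isT) /allP /(_ c); rewrite mem_iota hc; exact.
Qed.

Lemma allN_w (P : N3 -> bool) : allN P -> forall w : W, P (tr w).
Proof. by move=> H w; apply: allN_valid H _ (tr_valid w). Qed.

Definition step (e : rel N3) (Sl L : seq N3) :=
  undup (L ++ [seq y <- Sl | has (fun x => e x y) L]).
Definition reach (e : rel N3) (Sl : seq N3) (a : N3) := iter (size Sl) (step e Sl) [:: a].

Lemma reach_spec (Z : N3 -> Prop) (e : rel N3) (Sl : seq N3) a :
  a \in Sl -> Z a ->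
  (forall x y, x \in Sl -> y \in Sl -> e x y -> Z x -> Z y) ->
  forall y, y \in reach e Sl a -> Z y.
Proof.
move=> aS Za hcl.
suff : forall k y, y \in iter k (step e Sl) [:: a] -> (y \in Sl) /\ Z y.
  by move=> H y /H [].
elim=> [|k IH] y /=; first by rewrite inE => /eqP ->.
rewrite /step mem_undup mem_cat => /orP[/IH //|].
rewrite mem_filter => /andP[/hasP[x /IH [xS Zx] exy] yS]; split => //.
exact: hcl exy Zx.
Qed.

Lemma connS_of (R : realFieldType) (S : pred W) (off : W -> W -> R) (Sl : seq N3) (e : rel N3) :
  all validT Sl -> (forall w, (w \in S) = (tr w \in Sl)) ->
  (forall x y, x \in Sl -> y \in Sl -> e x y -> 0 < off (mkw y) (mkw x)) ->
  all (fun a => let r := reach e Sl a in all (fun y => y \in r) Sl) Sl ->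
  connS S off.
Proof.
move=> /allP hv hS he /allP hr Z hcl a b aS bS Za.
rewrite hS in aS; rewrite hS in bS.
have := @reach_spec (fun x => Z (mkw x)) e Sl (tr a) aS; rewrite mkw_tr => /(_ Za).
move=> H; rewrite -(mkw_tr b); apply: H; last by move/allP: (hr _ aS) => /(_ _ bS).
move=> x y xS yS exy Zx; apply: (hcl (mkw x) (mkw y)) Zx _.
- by rewrite hS tr_mkw ?hv.
- by rewrite hS tr_mkw ?hv.
- exact: he.
Qed.

Definition rotT (x : N3) : N3 := (x.1.2, x.2, x.1.1).
Definition rotiT (x : N3) : N3 := (x.2, x.1.1, x.1.2).
Definition swpT (x : N3) : N3 := (x.1.2, x.1.1, x.2).
Definition fR (w : W) : W := [ffun k : 'I_3 => w (inord ((k.+1) %% 3))].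
Definition gR (w : W) : W := [ffun k : 'I_3 => w (inord ((k.+2) %% 3))].
Definition fS (w : W) : W := [ffun k : 'I_3 => w (inord (tp 0 1 k))].

Lemma tr_fR w : tr (fR w) = rotT (tr w).
Proof. by rewrite /tr !ffunE /= !trE !inordK. Qed.
Lemma tr_gR w : tr (gR w) = rotiT (tr w).
Proof. by rewrite /tr !ffunE /= !trE !inordK. Qed.
Lemma tr_fS w : tr (fS w) = swpT (tr w).
Proof. by rewrite /tr !ffunE /= !trE !inordK. Qed.

Lemma fRK : cancel fR gR.
Proof. by move=> w; apply: tr_inj; rewrite tr_gR tr_fR; case: (tr w) => [[]]. Qed.
Lemma gRK : cancel gR fR.
Proof. by move=> w; apply: tr_inj; rewrite tr_fR tr_gR; case: (tr w) => [[]]. Qed.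
Lemma fSK : cancel fS fS.
Proof. by move=> w; apply: tr_inj; rewrite !tr_fS; case: (tr w) => [[]]. Qed.

Lemma fR_mkw x : validT x -> fR (mkw x) = mkw (rotT x).
Proof.
move=> hv; apply: tr_inj; rewrite tr_fR !tr_mkw //.
by move: hv; case: x => [[a b] c] /and3P[] /= *; apply/and3P.
Qed.
Lemma fS_mkw x : validT x -> fS (mkw x) = mkw (swpT x).
Proof.
move=> hv; apply: tr_inj; rewrite tr_fS !tr_mkw //.
by move: hv; case: x => [[a b] c] /and3P[] /= *; apply/and3P.
Qed.

Definition allList : seq N3 :=
  flatten (map (fun a => flatten (map (fun b => map (fun c => (a, b, c))
     (iota 0 3)) (iota 0 3))) (iota 0 3))%N.
Definition SlP (P : N3 -> bool) := [seq x <- allList | P x].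

Lemma allList_valid : all validT allList. Proof. by vm_compute. Qed.
Lemma allList_uniq : uniq allList. Proof. by vm_compute. Qed.
Lemma in_allList x : validT x -> x \in allList.
Proof. by apply: (allN_valid (P := fun x => x \in allList)); vm_compute. Qed.

Lemma SlP_valid P : all validT (SlP P).
Proof. by apply/allP => x; rewrite mem_filter => /andP[_ h]; exact: (allP allList_valid). Qed.
Lemma SlP_uniq P : uniq (SlP P).
Proof. exact: filter_uniq allList_uniq. Qed.
Lemma SlP_mem P (w : W) : P (tr w) = (tr w \in SlP P).
Proof. by rewrite mem_filter in_allList ?tr_valid // andbT. Qed.

Definition allT2 (P : N3 -> N3 -> bool) := allN (fun x => allN (fun y => P x y)).
Lemma allT2_w P : allT2 P -> forall a b : W, P (tr a) (tr b).
Proof. by move=> H a b; apply: (allN_w (P := fun y => P (tr a) y) (allN_w H a)). Qed.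

Lemma pos_comb (R : realFieldType) (t u : R) (a b c d : nat) : 0 <= t -> 0 < u ->
  (b + c + d != 0)%N -> 0 < (a%:R * t + b%:R) * cD R + (c%:R * u + d%:R) * cD R.
Proof.
move=> ht hu H; rewrite -mulrDl mulr_gt0 //; last by rewrite /cD invr_gt0 ltr0n.
have ha : 0 <= a%:R * t by rewrite mulr_ge0.
have hb : 0 <= b%:R :> R by [].
have hd : 0 <= d%:R :> R by [].
case: c H => [|c] H.
  rewrite mul0r add0r; rewrite addn0 in H.
  have : 0 < (b + d)%:R :> R by rewrite ltr0n lt0n.
  rewrite natrD => h; lra.
have : 0 < c.+1%:R * u by rewrite mulr_gt0 // ltr0n.
move=> h; lra.
Qed.

Notation SD := (@dasep_space 2 2 2).
Notation offD t u := (@dasep_off _ 2 2 t u).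
Definition LD := SlP (fun x => nnzT x == 2%N).
Definition eD (x y : N3) : bool := ((swc y x).2 + (grc y x).1 + (grc y x).2 != 0)%N.
Definition eSym (x y : N3) : bool := (y == rotT x) || (y == swpT x).

Lemma LD_mem (w : W) : (w \in SD) = (tr w \in LD).
Proof. by rewrite in_ds (SlP_mem (fun x => nnzT x == 2%N) w). Qed.

Lemma diag_chk : allN (fun x => (swc x x == (0,0)%N) && (grc x x == (0,0)%N)).
Proof. by vm_compute. Qed.

Lemma dasep_diag (R : realFieldType) (t u : R) w : offD t u w w = 0.
Proof.
rewrite dasep_offE; case/andP: (allN_w diag_chk w) => /eqP -> /eqP ->; rewrite /=; ring.
Qed.

Lemma dasep_ge0 (R : realFieldType) (t u : R) : 0 <= t -> 0 < u -> forall a b : W, 0 <= offD t u a b.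
Proof.
move=> ht hu a b; rewrite dasep_offE -mulrDl mulr_ge0 //; last by rewrite /cD invr_ge0 ler0n.
by rewrite !addr_ge0 ?mulr_ge0 // ltW.
Qed.

Lemma reachD_chk : all (fun a => let r := reach eD LD a in all (fun y => y \in r) LD) LD.
Proof. by vm_compute. Qed.

Lemma dasep_conn (R : realFieldType) (t u : R) : 0 <= t -> 0 < u -> connS SD (offD t u).
Proof.
move=> ht hu; have hv := SlP_valid (fun x => nnzT x == 2%N).
apply: (connS_of hv LD_mem _ reachD_chk).
move=> x y xS yS exy; rewrite dasep_offE !tr_mkw ?(allP hv) //; exact: pos_comb.
Qed.

Lemma rot_chk : allT2 (fun x y => (swc (rotT x) (rotT y) == swc x y) && (grc (rotT x) (rotT y) == grc x y)).
Proof. by vm_compute. Qed.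
Lemma swp_chk : allT2 (fun x y => ((swc (swpT x) (swpT y)).1 + (swc (swpT x) (swpT y)).2 ==
   (swc x y).1 + (swc x y).2)%N && (grc (swpT x) (swpT y) == grc x y)).
Proof. by vm_compute. Qed.
Lemma nnz_chk : allN (fun x => (nnzT (rotT x) == nnzT x) && (nnzT (swpT x) == nnzT x)).
Proof. by vm_compute. Qed.
Lemma perm_chk : allN (fun x => perm_eq (seqT (rotT x)) (seqT x) && perm_eq (seqT (swpT x)) (seqT x)).
Proof. by vm_compute. Qed.

Lemma SD_fR w : (fR w \in SD) = (w \in SD).
Proof. by rewrite !in_ds tr_fR; case/andP: (allN_w nnz_chk w) => /eqP -> _. Qed.
Lemma SD_fS w : (fS w \in SD) = (w \in SD).
Proof. by rewrite !in_ds tr_fS; case/andP: (allN_w nnz_chk w) => _ /eqP ->. Qed.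

Lemma offD_fR (R : realFieldType) (t u : R) a b : offD t u (fR a) (fR b) = offD t u a b.
Proof. by rewrite !dasep_offE !tr_fR; case/andP: (allT2_w rot_chk a b) => /eqP -> /eqP ->. Qed.
Lemma offD_fS (R : realFieldType) (u : R) a b : offD 1 u (fS a) (fS b) = offD 1 u a b.
Proof.
rewrite !dasep_offE !tr_fS; case/andP: (allT2_w swp_chk a b) => /eqP h /eqP ->.
by rewrite !mulr1 -!natrD h.
Qed.

Section PdFacts.
Variables (R : realFieldType) (t u : R) (ht : 0 <= t) (hu : 0 < u) (Pd : W -> R).
Hypothesis st : stationary SD (offD t u) Pd.

Lemma Pd_pos w : w \in SD -> 0 < Pd w.
Proof. exact: (st_pos (@dasep_diag R t u) (dasep_ge0 ht hu) (dasep_conn ht hu) st). Qed.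

Lemma Pd_fR w : w \in SD -> Pd (fR w) = Pd w.
Proof.
move=> wS.
exact: (st_uniq (@dasep_diag R t u) (dasep_ge0 ht hu) (dasep_conn ht hu)
  (st_sym fRK SD_fR (@offD_fR R t u) st) st wS).
Qed.

Lemma Pd_fS : t = 1 -> forall w, w \in SD -> Pd (fS w) = Pd w.
Proof.
move=> t1; move: st; rewrite t1 => st1 w wS.
exact: (st_uniq (@dasep_diag R 1 u) (dasep_ge0 ler01 hu) (dasep_conn ler01 hu)
  (st_sym fSK SD_fS (@offD_fS R u) st1) st1 wS).
Qed.
End PdFacts.

Notation SA lam := (@rearr 2 2 lam).
Notation offA t := (@asep_off _ 2 2 t).
Definition cA (R : realFieldType) : R := (3%:R)^-1.
Definition clsL (l : N3) := SlP (fun x => perm_eq (seqT x) (seqT l)).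
Definition LL : seq N3 := [:: (1,1,0); (2,1,0); (2,2,0)]%N.
Definition eA (x y : N3) : bool := ((swc y x).2 != 0)%N.

Lemma asep_offE (R : realFieldType) (t : R) a b :
  offA t a b = ((swc (tr a) (tr b)).1%:R * t + (swc (tr a) (tr b)).2%:R) * cA R.
Proof. by rewrite /asep_off swap_rateE. Qed.

Lemma SA_mem (lam w : W) : (w \in SA lam) = (tr w \in clsL (tr lam)).
Proof. by rewrite in_rearr (SlP_mem (fun x => perm_eq (seqT x) (seqT (tr lam))) w). Qed.

Lemma asep_diag (R : realFieldType) (t : R) w : offA t w w = 0.
Proof.
rewrite asep_offE; case/andP: (allN_w diag_chk w) => /eqP -> _; rewrite /=; ring.
Qed.

Lemma asep_ge0 (R : realFieldType) (t : R) : 0 <= t -> forall a b : W, 0 <= offA t a b.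
Proof.
move=> ht a b; rewrite asep_offE mulr_ge0 //; last by rewrite /cA invr_ge0 ler0n.
by rewrite !addr_ge0 ?mulr_ge0.
Qed.

Lemma lam_chk : allN (fun x => partT x && (nnzT x == 2%N) ==> (x \in LL)).
Proof. by vm_compute. Qed.

Lemma reachA_chk : all (fun l => let Sl := clsL l in
  all (fun a => let r := reach eA Sl a in all (fun y => y \in r) Sl) Sl) LL.
Proof. by vm_compute. Qed.

Lemma asep_conn (R : realFieldType) (t : R) (lam : W) : 0 <= t -> tr lam \in LL -> connS (SA lam) (offA t).
Proof.
move=> ht hl; have hv := SlP_valid (fun x => perm_eq (seqT x) (seqT (tr lam))).
apply: (connS_of hv (@SA_mem lam) _ (allP reachA_chk _ hl)).
move=> x y xS yS exy; rewrite asep_offE !tr_mkw ?(allP hv) //.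
rewrite mulr_gt0 //; last by rewrite /cA invr_gt0 ltr0n.
apply: ltr_wpDl; first by rewrite mulr_ge0.
by rewrite ltr0n lt0n.
Qed.

Lemma SA_fR lam w : (fR w \in SA lam) = (w \in SA lam).
Proof. by rewrite !in_rearr tr_fR; case/andP: (allN_w perm_chk w) => /permPl -> _. Qed.
Lemma SA_fS lam w : (fS w \in SA lam) = (w \in SA lam).
Proof. by rewrite !in_rearr tr_fS; case/andP: (allN_w perm_chk w) => _ /permPl ->. Qed.

Lemma offA_fR (R : realFieldType) (t : R) a b : offA t (fR a) (fR b) = offA t a b.
Proof. by rewrite !asep_offE !tr_fR; case/andP: (allT2_w rot_chk a b) => /eqP -> _. Qed.
Lemma offA_fS (R : realFieldType) a b : offA (1 : R) (fS a) (fS b) = offA 1 a b.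
Proof.
rewrite !asep_offE !tr_fS; case/andP: (allT2_w swp_chk a b) => /eqP h _.
by rewrite !mulr1 -!natrD h.
Qed.

Lemma class_const (R : realFieldType) (F : W -> R) (Sl : seq N3) : all validT Sl ->
  (forall x, x \in Sl -> F (mkw (rotT x)) = F (mkw x) /\ F (mkw (swpT x)) = F (mkw x)) ->
  forall a y, a \in Sl -> y \in reach eSym Sl a -> F (mkw y) = F (mkw a).
Proof.
move=> hv hF a y aS; apply: (@reach_spec (fun x => F (mkw x) = F (mkw a))) => // x z xS zS.
case/orP => /eqP -> <-; by case: (hF x xS).
Qed.

Lemma symreach_chk : all (fun l => let Sl := clsL l in
  all (fun a => let r := reach eSym Sl a in all (fun y => y \in r) Sl) Sl) LL.
Proof. by vm_compute. Qed.
Lemma clsSD_chk : all (fun l => all (fun x => nnzT x == 2%N) (clsL l)) LL.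
Proof. by vm_compute. Qed.

Lemma rotT_valid x : validT x -> validT (rotT x).
Proof. by case: x => [[a b] c] /and3P[] /= *; apply/and3P. Qed.
Lemma swpT_valid x : validT x -> validT (swpT x).
Proof. by case: x => [[a b] c] /and3P[] /= *; apply/and3P. Qed.

Lemma forward (R : realFieldType) (u : R) (hu : 0 < u) (Pd : W -> R)
  (st : stationary SD (offD 1 u) Pd) (lam : W) (hp : is_partition lam) (hn : nnz lam = 2%N)
  (Pr : W -> R) (sPr : stationary (SA lam) (offA 1) Pr) (mu nu : W) :
  mu \in SA lam -> nu \in SA lam -> Pr mu / Pr nu = Pd mu / Pd nu.
Proof.
move=> hmu hnu.
have hl : tr lam \in LL.
  by have := allN_w lam_chk lam; rewrite -partE -nnzE hp hn eqxx => /implyP; apply.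
set Sl := clsL (tr lam).
have hv : all validT Sl := SlP_valid _.
have hSD : forall x, x \in Sl -> mkw x \in SD.
  by move=> x xS; rewrite in_ds tr_mkw ?(allP hv) //; apply: (allP (allP clsSD_chk _ hl)).
have hSA : forall x, x \in Sl -> mkw x \in SA lam.
  by move=> x xS; rewrite SA_mem tr_mkw ?(allP hv).
have hr : forall a y, a \in Sl -> y \in Sl -> y \in reach eSym Sl a.
  move=> a y aS yS; have /allP := allP symreach_chk _ hl.
  by move=> /(_ a aS) /allP /(_ y yS).
rewrite SA_mem in hmu; rewrite SA_mem in hnu.
have PrE : Pr mu = Pr nu.
  rewrite -(mkw_tr mu) -(mkw_tr nu); apply: (class_const hv _ (a := tr nu)) => //.
    move=> x xS; rewrite -fR_mkw ?(allP hv) // -fS_mkw ?(allP hv) //.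
    split; apply/esym.
      exact: (st_uniq (@asep_diag R 1) (asep_ge0 ler01) (asep_conn ler01 hl) sPr
        (st_sym fRK (@SA_fR lam) (@offA_fR R 1) sPr) (hSA x xS)).
    exact: (st_uniq (@asep_diag R 1) (asep_ge0 ler01) (asep_conn ler01 hl) sPr
        (st_sym fSK (@SA_fS lam) (@offA_fS R) sPr) (hSA x xS)).
  exact: hr.
have PdE : Pd mu = Pd nu.
  rewrite -(mkw_tr mu) -(mkw_tr nu); apply: (class_const hv _ (a := tr nu)) => //.
    move=> x xS; rewrite -fR_mkw ?(allP hv) // -fS_mkw ?(allP hv) //.
    split; first exact: (Pd_fR ler01 hu st (hSD x xS)).
    exact: (Pd_fS hu st erefl (hSD x xS)).
  exact: hr.
have Prp : 0 < Pr nu.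
  have hnu2 : nu \in SA lam by rewrite SA_mem.
  exact: (st_pos (@asep_diag R 1) (asep_ge0 ler01) (asep_conn ler01 hl) sPr hnu2).
have Pdp : 0 < Pd nu.
  by apply: (Pd_pos ler01 hu st); rewrite -(mkw_tr nu); apply: hSD.
by rewrite PrE PdE !divff // gt_eqF.
Qed.

Ltac evalc := repeat match goal with
 | |- context [swc ?x ?y] => let v := eval vm_compute in (swc x y) in change (swc x y) with v
 | |- context [grc ?x ?y] => let v := eval vm_compute in (grc x y) in change (grc x y) with v
 end.

Lemma LDE : LD = [:: (0,1,1); (0,1,2); (0,2,1); (0,2,2); (1,0,1); (1,0,2);
   (1,1,0); (1,2,0); (2,0,1); (2,0,2); (2,1,0); (2,2,0)]%N.
Proof. by vm_compute. Qed.

Lemma Pd_XY (R : realFieldType) (t u : R) (ht : 0 <= t) (hu : 0 < u) (Pd : W -> R)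
  (st : stationary SD (offD t u) Pd) :
  Pd (mkw (2,1,0)%N) * (u + 3%:R + 4%:R * t) = Pd (mkw (1,2,0)%N) * (u + 5%:R + 2%:R * t).
Proof.
have bal := st_bal (@dasep_diag R t u) st.
have sumE : forall F : W -> R, \sum_(w | w \in SD) F w = \sum_(x <- LD) F (mkw x).
  by move=> F; apply: sum_list (SlP_valid _) (SlP_uniq _) LD_mem.
have hr : forall x, x \in LD -> Pd (mkw (rotT x)) = Pd (mkw x).
  move=> x xS; have hv := allP (SlP_valid (fun x => nnzT x == 2%N)) x xS.
  by rewrite -fR_mkw // (Pd_fR ht hu st) // LD_mem tr_mkw.
have hX : mkw (1,2,0)%N \in SD by rewrite in_ds tr_mkw.
have hY : mkw (2,1,0)%N \in SD by rewrite in_ds tr_mkw.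
have EX := bal _ hX.
have EY := bal _ hY.
move: EX EY; rewrite /In /Out !sumE LDE !big_cons !big_nil !dasep_offE !tr_mkw //.
evalc; rewrite /=.
have e1 : Pd (mkw (1,0,1)%N) = Pd (mkw (1,1,0)%N) by apply: (hr (1,1,0)%N); rewrite LDE.
have e2 : Pd (mkw (0,1,1)%N) = Pd (mkw (1,0,1)%N) by apply: (hr (1,0,1)%N); rewrite LDE.
have e3 : Pd (mkw (2,0,2)%N) = Pd (mkw (2,2,0)%N) by apply: (hr (2,2,0)%N); rewrite LDE.
have e4 : Pd (mkw (0,2,2)%N) = Pd (mkw (2,0,2)%N) by apply: (hr (2,0,2)%N); rewrite LDE.
have e5 : Pd (mkw (2,0,1)%N) = Pd (mkw (1,2,0)%N) by apply: (hr (1,2,0)%N); rewrite LDE.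
have e6 : Pd (mkw (0,1,2)%N) = Pd (mkw (2,0,1)%N) by apply: (hr (2,0,1)%N); rewrite LDE.
have e7 : Pd (mkw (1,0,2)%N) = Pd (mkw (2,1,0)%N) by apply: (hr (2,1,0)%N); rewrite LDE.
have e8 : Pd (mkw (0,2,1)%N) = Pd (mkw (1,0,2)%N) by apply: (hr (1,0,2)%N); rewrite LDE.
rewrite e2 e1 e4 e3 e6 e5 e8 e7 => EX EY.
have c0 : cD R != 0 by rewrite /cD invr_eq0 pnatr_eq0.
apply: (mulIf c0).
lra.
Qed.


Definition isX (x : N3) : bool := x \in [:: (1,2,0); (2,0,1); (0,1,2)]%N.
Definition PX (R : realFieldType) (t : R) : R := (1 + 2%:R * t) / (9%:R * (1 + t)).
Definition PY (R : realFieldType) (t : R) : R := (2%:R + t) / (9%:R * (1 + t)).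
Definition Pr0 (R : realFieldType) (t : R) (w : W) : R := if isX (tr w) then PX t else PY t.
Definition lam0 : W := mkw (2,1,0)%N.

Ltac evalx := repeat match goal with
 | |- context [isX ?x] => let v := eval vm_compute in (isX x) in change (isX x) with v
 end.

Lemma clsE : clsL (2,1,0)%N = [:: (0,1,2); (0,2,1); (1,0,2); (1,2,0); (2,0,1); (2,1,0)]%N.
Proof. by vm_compute. Qed.

Ltac solve_case t1 t9 sumE :=
  rewrite /In /Out !sumE clsE !big_cons !big_nil !asep_offE !tr_mkw //; evalc;
  rewrite /= /Pr0 !tr_mkw //; evalx; rewrite /= /PX /PY /cA; field;
  rewrite ?t1 ?t9 ?pnatr_eq0 //.

Lemma Pr0_st (R : realFieldType) (t : R) (ht : 0 <= t) : stationary (SA lam0) (offA t) (Pr0 t).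
Proof.
have t1 : 1 + t != 0 by rewrite gt_eqF // ltr_pwDl.
have t9 : 9%:R * (1 + t) != 0 by rewrite mulf_neq0 // pnatr_eq0.
have sumE : forall F : W -> R, \sum_(w | w \in SA lam0) F w = \sum_(x <- clsL (2,1,0)%N) F (mkw x).
  move=> F; apply: sum_list; [exact: SlP_valid | exact: SlP_uniq |].
  by move=> w; rewrite SA_mem /lam0 tr_mkw.
apply: (bal_st (@asep_diag R t)).
- move=> w _; rewrite /Pr0; case: isX; rewrite /PX /PY divr_ge0 // ?mulr_ge0 // ?addr_ge0 //.
  by rewrite mulr_ge0.
- rewrite sumE clsE !big_cons !big_nil /Pr0 !tr_mkw //; evalx; rewrite /= /PX /PY.
  field => //.
move=> nu; rewrite SA_mem /lam0 tr_mkw // => hnu; rewrite -(mkw_tr nu); move: (tr nu) hnu => x.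
rewrite clsE !inE => hx.
repeat (case/orP: hx => [/eqP -> | hx]; [solve_case t1 t9 sumE|]).
move/eqP: hx => ->; solve_case t1 t9 sumE.
Qed.

Lemma backward (R : realFieldType) (t u : R) (ht : 0 <= t) (hu : 0 < u) (Pd : W -> R)
  (st : stationary SD (offD t u) Pd)
  (Hall : forall lam : W, is_partition lam -> nnz lam = 2%N ->
     forall Pr : W -> R, stationary (SA lam) (offA t) Pr ->
     forall mu nu : W, mu \in SA lam -> nu \in SA lam -> Pr mu / Pr nu = Pd mu / Pd nu) :
  t = 1.
Proof.
have hp : is_partition lam0 by rewrite partE /lam0 tr_mkw.
have hn : nnz lam0 = 2%N by rewrite nnzE /lam0 tr_mkw.
have hmu : mkw (1,2,0)%N \in SA lam0 by rewrite in_rearr /lam0 !tr_mkw.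
have hnu : mkw (2,1,0)%N \in SA lam0 by rewrite in_rearr /lam0 !tr_mkw.
have H := Hall lam0 hp hn (Pr0 t) (Pr0_st ht) _ _ hmu hnu.
move: H; rewrite /Pr0 !tr_mkw //; evalx; rewrite /= /PX /PY.
have XY := Pd_XY ht hu st.
set X := Pd (mkw (1,2,0)%N) in XY *; set Y := Pd (mkw (2,1,0)%N) in XY *.
have Yp : 0 < Y by apply: (Pd_pos ht hu st); rewrite in_ds tr_mkw.
have t1 : 1 + t != 0 by rewrite gt_eqF // ltr_pwDl.
have t2 : 2%:R + t != 0 by rewrite gt_eqF // ltr_pwDl.
have t9 : 9%:R * (1 + t) != 0 by rewrite mulf_neq0 // pnatr_eq0.
move=> H.
have eX : X = (1 + 2%:R * t) / (2%:R + t) * Y.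
  have : X / Y * Y = X by rewrite divfK // gt_eqF.
  move=> <-; rewrite -H; congr (_ * _); field; rewrite ?t1 ?t2 ?t9 ?pnatr_eq0 //.
have k : Y * ((1 - t) * (u + 1)) = 0.
  have -> : Y * ((1 - t) * (u + 1)) =
    (2%:R + t) * (Y * (u + 3%:R + 4%:R * t)) - (1 + 2%:R * t) * Y * (u + 5%:R + 2%:R * t) by ring.
  rewrite XY eX; field; rewrite ?t2 //.
move/eqP: k; rewrite !mulf_eq0 (gt_eqF Yp) /= => /orP[|].
  by rewrite subr_eq0 => /eqP <-.
by rewrite gt_eqF // ltr_wpDr.
Qed.

Unset Implicit Arguments.

Theorem mainTheorem1 (R : realFieldType) (t u : R)
  (ht0 : 0 <= t) (ht1 : t <= 1) (hu : 0 < u)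
  (Pd : word 3 2 -> R) (hPd : Pd_stationary (n := 2) t u 2 Pd) :
  t = 1 <->
  (forall lam : word 3 2, is_partition lam -> nnz lam = 2%N ->
   forall Pr : word 3 2 -> R, Pr_stationary t lam Pr ->
   forall mu nu : word 3 2, mu \in rearr lam -> nu \in rearr lam ->
     Pr mu / Pr nu = Pd mu / Pd nu).
Proof.
split.
- move=> t1 lam hp hn Pr hPr mu nu hmu hnu.
  rewrite t1 in hPd hPr.
  exact: (forward hu hPd hp hn hPr hmu hnu).
- move=> Hall; exact: (backward ht0 hu hPd Hall).
Qed.
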